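(* Let $(u,x)\in\mathrm{Bur}_n$ and $(v,y)\in\mathrm{Bur}_k$. Then $(v,y)\le(u,x)$ if and only if $(v,y)^T\le(u,x)^T$.
   Context: $\mathrm{Cay}_n$ is the set of Cayley permutations of length $n$ (words of positive integers in which every integer from $1$ to the maximum occurs), $\mathrm{WI}_n$ its weakly increasing elements. A pair $(u,v)\in\mathrm{WI}_n\times\mathrm{Cay}_n$ is a biword with columns $\binom{u(i)}{v(i)}$. The Burge transpose $(u,v)^T$ turns every column $\binom{a}{b}$ into $\binom{b}{a}$ and sorts the columns increasingly by top entry, ties by decreasing bottom entry. With $\mathrm{Des}(v)=\{i:v(i)\ge v(i+1)\}$, $\mathrm{Bur}_n=\{(u,v)\in\mathrm{WI}_n\times\mathrm{Cay}_n:\mathrm{Des}(u)\subseteq\mathrm{Des}(v)\}$; $T$ maps $\mathrm{Bur}_n$ to itself. Two words $a,b$ of the same length $k$ are order isomorphic if $a(s)<a(t)\iff b(s)<b(t)$ and $a(s)=a(t)\iff b(s)=b(t)$. For $(u',v')\in\mathrm{Bur}_k$, $(u,v)\in\mathrm{Bur}_n$: $(u',v')\le(u,v)$ iff there are indices $i_1<\dots<i_k$ such that $u(i_1)\cdots u(i_k)$ is order isomorphic to $u'$ and $v(i_1)\cdots v(i_k)$ is order isomorphic to $v'$. *)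

(* Defs.v *)
(* Words are 0-indexed sequences of naturals. *)
From mathcomp Require Import all_boot.
Set Implicit Arguments. Unset Strict Implicit. Unset Printing Implicit Defensive.

Definition cayley (w : seq nat) : bool :=
  all (fun a => 0 < a) w && all (fun j => j \in w) (iota 1 (\max_(a <- w) a)).

Definition Cay (n : nat) (w : seq nat) : bool := (size w == n) && cayley w.

Definition wincr (w : seq nat) : bool := sorted leq w.

Definition WI (n : nat) (w : seq nat) : bool := Cay n w && wincr w.

Definition is_des (w : seq nat) (i : nat) : bool :=
  (i.+1 < size w) && (nth 0 w i.+1 <= nth 0 w i).

Definition Bur (n : nat) (b : seq nat * seq nat) : Prop :=
  WI n b.1 /\ Cay n b.2 /\ (forall i, is_des b.1 i -> is_des b.2 i).

Definition col_le (p q : nat * nat) : bool :=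
  (p.1 < q.1) || ((p.1 == q.1) && (q.2 <= p.2)).

Definition burgeT (b : seq nat * seq nat) : seq nat * seq nat :=
  let cols := sort col_le [seq (c.2, c.1) | c <- zip b.1 b.2] in
  (unzip1 cols, unzip2 cols).

Definition order_iso (a b : seq nat) : Prop :=
  size a = size b /\
  forall s t, s < size a -> t < size a ->
    ((nth 0 a s < nth 0 a t) = (nth 0 b s < nth 0 b t)) /\
    ((nth 0 a s == nth 0 a t) = (nth 0 b s == nth 0 b t)).

Definition patle (p b : seq nat * seq nat) : Prop :=
  exists idx : seq nat,
    [/\ size idx = size p.1, sorted ltn idx, all (fun i => i < size b.1) idx,
        order_iso [seq nth 0 b.1 i | i <- idx] p.1 &
        order_iso [seq nth 0 b.2 i | i <- idx] p.2].

(* Main.v *)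
From Stdlib Require Import Setoid.
Require Import Defs.
From mathcomp Require Import all_boot.

Definition swap (p : nat * nat) : nat * nat := (p.2, p.1).

Lemma swapK : involutive swap. Proof. by case. Qed.

Lemma col_le_total : total col_le.
Proof.
move=> [a b] [c d]; rewrite /col_le /=.
case: (ltngtP a c) => //= _; exact: leq_total.
Qed.

Lemma col_le_trans : transitive col_le.
Proof.
move=> [a b] [c d] [e f]; rewrite /col_le /=.
move=> /orP[H1|/andP[/eqP E1 H1]] /orP[H2|/andP[/eqP E2 H2]]; subst.
- by rewrite (ltn_trans H1 H2).
- by rewrite H1.
- by rewrite H2.
- by rewrite eqxx ltnn (leq_trans H2 H1) orbT.
Qed.

Lemma col_le_anti : antisymmetric col_le.
Proof.
move=> [a b] [c d]; rewrite /col_le /=.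
case: (ltngtP a c) => //= <- H.
by rewrite (anti_leq H).
Qed.

Definition cmp (a b c d : nat) : bool := ((a < b) == (c < d)) && ((a == b) == (c == d)).
Definition cnd (p q : (nat * nat) * (nat * nat)) : bool :=
  cmp p.1.1 q.1.1 p.2.1 q.2.1 && cmp p.1.2 q.1.2 p.2.2 q.2.2.
Definition good (W : seq ((nat * nat) * (nat * nat))) : bool :=
  all (fun p => all (cnd p) W) W.
Definition patP (Q P : seq (nat * nat)) : Prop :=
  exists S, [/\ subseq S P, size S = size Q & good (zip S Q)].

Definition d0 : (nat * nat) * (nat * nat) := ((0,0),(0,0)).

Lemma goodP W : good W <-> forall s t, s < size W -> t < size W ->
  cnd (nth d0 W s) (nth d0 W t).
Proof.
split.
- move/allP=> H s t hs ht; have /allP := H _ (mem_nth d0 hs); apply; exact: mem_nth.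
- move=> H; apply/allP=> p /(nthP d0) [s hs <-]; apply/allP=> q /(nthP d0) [t ht <-].
  exact: H.
Qed.

Lemma good_perm W W' : perm_eq W W' -> good W = good W'.
Proof.
move=> pe; rewrite /good (perm_all _ pe); apply: eq_all => p; exact: perm_all.
Qed.

Lemma subseq_idx (T : eqType) (x0 : T) (s t : seq T) : subseq t s ->
  exists idx, [/\ sorted ltn idx, all (fun i => i < size s) idx & t = map (nth x0 s) idx].
Proof.
elim: s t => [|a s IH] t.
  by rewrite subseq0 => /eqP ->; exists [::].
case: t => [_|b t]; first by exists [::].
rewrite /=; case: eqP => [->|_] H.
- have [idx [h1 h2 h3]] := IH _ H.
  exists (0 :: map succn idx); split => /=.
  + case: idx h1 {h2 h3} => //= i idx h1; by rewrite path_map.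
  + by rewrite all_map; apply: sub_all h2 => j.
  + by rewrite h3 -map_comp.
- have [idx [h1 h2 h3]] := IH _ H.
  exists (map succn idx); split => /=.
  + by rewrite sorted_map.
  + by rewrite all_map; apply: sub_all h2 => j.
  + by rewrite h3 -map_comp.
Qed.

Lemma idx_subseq_gen (T : eqType) (x0 : T) (s : seq T) : forall idx d,
  sorted ltn idx -> all (fun i => d <= i < d + size s) idx ->
  subseq (map (fun i => nth x0 s (i - d)) idx) s.
Proof.
elim: s => [|a s IH] idx d.
  by case: idx => //= i idx _ /andP[/andP[h1 h2]]; rewrite addn0 ltnNge h1 in h2.
case: idx => [|i idx]; first by rewrite sub0seq.
move=> hs /andP[/andP[hi1 hi2] hall]; rewrite /= in hs.
have hgt : all (fun j => i < j) idx by apply: order_path_min hs; exact: ltn_trans.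
have hs' := path_sorted hs.
have hall' : all (fun j => d.+1 <= j < d.+1 + size s) idx.
  apply/allP => j jin; move/allP: hall => /(_ j jin) /andP[_ h2].
  move/allP: hgt => /(_ j jin) h3.
  by rewrite addSnnS h2 andbT; apply: leq_ltn_trans h3.
have heq : map (fun j => nth x0 (a :: s) (j - d)) idx = map (fun j => nth x0 s (j - d.+1)) idx.
  apply/eq_in_map => j jin; move/allP: hall' => /(_ j jin) /andP[h1 _].
  by rewrite subnS; case E: (j - d) => [|m] /=; [move: h1; rewrite -subn_gt0 E|].
case: (ltngtP i d) hi1 => // [hid|E] _.
- have hs2 : sorted ltn (i :: idx) by [].
  have hall2 : all (fun j => d.+1 <= j < d.+1 + size s) (i :: idx).
    by rewrite /= hall' andbT hid addSnnS hi2.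
  eapply subseq_trans; last exact: (subseq_cons s a).
  have := IH _ _ hs2 hall2.
  congr (subseq _ _) => /=; congr (_ :: _).
  + by rewrite subnS; move: hid; rewrite -subn_gt0; case: (i - d).
  + by rewrite heq.
- by rewrite E /= subnn eqxx heq; apply: IH.
Qed.

Lemma idx_subseq (T : eqType) (x0 : T) (s : seq T) idx :
  sorted ltn idx -> all (fun i => i < size s) idx -> subseq (map (nth x0 s) idx) s.
Proof.
move=> h1 h2; have := @idx_subseq_gen T x0 s idx 0 h1.
rewrite (eq_map (g := nth x0 s)); last by move=> i; rewrite subn0.
by apply.
Qed.

Lemma nth_R u x v y idx s : size u = size x -> size v = size y -> size idx = size v ->
  s < size idx ->
  nth d0 (zip (map (nth (0,0) (zip u x)) idx) (zip v y)) s =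
  ((nth 0 u (nth 0 idx s), nth 0 x (nth 0 idx s)), (nth 0 v s, nth 0 y s)).
Proof.
move=> hu hv hi hs; rewrite /d0 nth_zip; last by rewrite size_map size_zip hv minnn hi hv.
by rewrite (nth_map 0) // !nth_zip.
Qed.

Lemma conv u x v y : size u = size x -> size v = size y ->
  patle (v, y) (u, x) <-> patP (zip v y) (zip u x).
Proof.
move=> hu hv; split.
- move=> [idx [/= hsz h1 h2 h4 h5]].
  exists (map (nth (0,0) (zip u x)) idx); split.
  + by apply: idx_subseq => //; rewrite size_zip hu minnn -hu.
  + by rewrite size_map size_zip hv minnn hsz hv.
  + have hZ : size (zip (map (nth (0,0) (zip u x)) idx) (zip v y)) = size idx.
      by rewrite size_zip size_map size_zip hv minnn hsz hv minnn.
    apply/goodP => s t; rewrite hZ => hs ht.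
    rewrite (nth_R _ _ _ _ _ _ hu hv hsz hs) (nth_R _ _ _ _ _ _ hu hv hsz ht).
    case: h4 => _ /(_ s t); rewrite size_map => /(_ hs ht) [].
    rewrite !(nth_map 0) // => e1 e2.
    case: h5 => _ /(_ s t); rewrite size_map => /(_ hs ht) [].
    rewrite !(nth_map 0) // => e3 e4.
    by rewrite /cnd /cmp /= e1 e2 e3 e4 !eqxx.
- move=> [S [hsub hsz hg]].
  have [idx [h1 h2 h3]] := @subseq_idx _ (0,0) _ _ hsub.
  have hsi : size idx = size v by rewrite -(size_map (nth (0,0) (zip u x))) -h3 hsz size_zip hv minnn.
  move: hg; rewrite h3 => /goodP hg.
  exists idx; split => //.
  + by move: h2; rewrite size_zip hu minnn -hu.
  + split; first by rewrite size_map.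
    move=> s t; rewrite size_map => hs ht.
    move: (hg s t); rewrite size_zip size_map size_zip hv minnn -hv -hsi minnn.
    move=> /(_ hs ht); rewrite (nth_R _ _ _ _ _ _ hu hv hsi hs) (nth_R _ _ _ _ _ _ hu hv hsi ht) /cnd /cmp /= !(nth_map 0) //.
    by move=> /andP[/andP[/eqP e1 /eqP e2] _].
  + split; first by rewrite size_map hsi.
    move=> s t; rewrite size_map => hs ht.
    move: (hg s t); rewrite size_zip size_map size_zip hv minnn -hv -hsi minnn.
    move=> /(_ hs ht); rewrite (nth_R _ _ _ _ _ _ hu hv hsi hs) (nth_R _ _ _ _ _ _ hu hv hsi ht) /cnd /cmp /= !(nth_map 0) //.
    by move=> /andP[_ /andP[/eqP e1 /eqP e2]].
Qed.

Definition sw2 (r : (nat * nat) * (nat * nat)) := (swap r.1, swap r.2).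

Lemma good_sw2 W : good (map sw2 W) = good W.
Proof.
rewrite /good all_map; apply: eq_all => p /=; rewrite all_map; apply: eq_all => q /=.
by rewrite /cnd /= andbC.
Qed.

Lemma cnd_col p q : cnd p q -> col_le p.1 q.1 = col_le p.2 q.2.
Proof.
rewrite /cnd /cmp /col_le => /andP[/andP[/eqP e1 /eqP e2] /andP[/eqP e3 /eqP e4]].
by rewrite e1 e2 (leqNgt q.1.2) (leqNgt q.2.2) e3.
Qed.

Lemma F Q P : patP Q P -> patP (sort col_le (map swap Q)) (sort col_le (map swap P)).
Proof.
move=> [S [hsub hsz hg]].
set R2 := map sw2 (zip S Q).
set R3 := sort (relpre fst col_le) R2.
have pR : perm_eq R3 R2 by rewrite perm_sort.
have g3 : good R3 by rewrite (good_perm _ _ pR) good_sw2.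
have e1 : map fst R2 = map swap S.
  rewrite /R2 -map_comp (eq_map (g := swap \o fst)); last by [].
  by rewrite map_comp; congr map; apply: unzip1_zip; rewrite hsz.
have e2 : map snd R2 = map swap Q.
  rewrite /R2 -map_comp (eq_map (g := swap \o snd)); last by [].
  by rewrite map_comp; congr map; apply: unzip2_zip; rewrite hsz.
have f1 : map fst R3 = sort col_le (map swap S) by rewrite -e1 sort_map.
have f2 : map snd R3 = sort col_le (map swap Q).
  apply: (sorted_eq col_le_trans col_le_anti).
  - rewrite sorted_map.
    have s3 : sorted (relpre fst col_le) R3.
      apply: sort_sorted => a b /=; exact: col_le_total.
    rewrite -(@eq_in_sorted _ (mem R3) (relpre fst col_le)) //.
    move=> a b ha hb /=; apply: cnd_col.
    by move/allP: g3 => /(_ a ha) /allP /(_ b hb).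
  - exact: sort_sorted col_le_total _.
  - by rewrite perm_sym perm_sort perm_sym -e2; apply: perm_map.
exists (map fst R3); split.
- rewrite f1; apply: subseq_sort; [exact: col_le_total|exact: col_le_trans|].
  exact: map_subseq.
- by rewrite -f2 !size_map.
- by rewrite -f2 zip_unzip.
Qed.

Lemma burgeT_zip b : zip (burgeT b).1 (burgeT b).2 = sort col_le (map swap (zip b.1 b.2)).
Proof. by rewrite /burgeT /= zip_unzip. Qed.

Lemma burgeT_size b : size (burgeT b).1 = size (burgeT b).2.
Proof. by rewrite /burgeT /= !size_map. Qed.

Lemma invol W : sorted col_le W -> sort col_le (map swap (sort col_le (map swap W))) = W.
Proof.
move=> hW; apply: (sorted_eq col_le_trans col_le_anti) => //.
  exact: sort_sorted col_le_total _.
rewrite perm_sort.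
have -> : W = map swap (map swap W) by rewrite -map_comp map_id_in // => p _; case: p.
apply: perm_map; rewrite perm_sort; by rewrite -map_comp map_id_in // => p _; case: p.
Qed.

Lemma bur_sorted n u x : Bur n (u, x) -> size u = size x /\ sorted col_le (zip u x).
Proof.
move=> [/andP[/andP[/eqP hu _] hinc] [/andP[/eqP hx _] hd]].
have hsz : size u = size x by rewrite hu hx.
split => //.
apply/(sortedP (0,0)) => i; rewrite size_zip -hsz minnn => hi.
rewrite !nth_zip //.
rewrite /col_le /=.
move: hinc; rewrite /wincr /= => /(sortedP 0) /(_ i hi) hle.
move: hle; rewrite leq_eqVlt => /orP[/eqP E|->] //.
rewrite E ltnn eqxx /=.
have : is_des u i by rewrite /is_des hi E leqnn.
by move/hd; rewrite /is_des => /andP[].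
Qed.

Theorem lemma4p6 (n k : nat) (u x v y : seq nat) :
  Bur n (u, x) -> Bur k (v, y) ->
  (patle (v, y) (u, x) <-> patle (burgeT (v, y)) (burgeT (u, x))).
Proof.
move=> hb1 hb2.
have [hux sux] := bur_sorted _ _ _ hb1; have [hvy svy] := bur_sorted _ _ _ hb2.
rewrite (conv _ _ _ _ hux hvy).
have c1 := burgeT_zip (v, y); have c2 := burgeT_zip (u, x).
have z1 := burgeT_size (v, y); have z2 := burgeT_size (u, x).
case: (burgeT (v, y)) c1 z1 => a b /= c1 z1.
case: (burgeT (u, x)) c2 z2 => c d /= c2 z2.
rewrite (conv _ _ _ _ z2 z1) c1 c2.
split; first exact: F.
by move/F; rewrite !invol.
Qed.
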